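(* Let $X$ be a locally compact metrizable space, and write $X = X_p \cup X_s$ for its unique decomposition into a disjoint union of a perfect set $X_p$ and a scattered set $X_s$. Then the hypocompact radical of the commutative Banach algebra $C_0(X)$ is $$C_0(X)_{hc} = \{ f \in C_0(X) : f(x) = 0 \text{ for all } x \in X_p \}.$$
   Context: For a Banach algebra $\mathcal B$, an element $a\in\mathcal B$ is called compact if the map $M_{a,a}:\mathcal B\to\mathcal B$, $x\mapsto axa$, is a compact operator. A Banach algebra $\mathcal B$ is hypocompact if every nonzero quotient $\mathcal B/\mathcal J$ by a closed two-sided ideal $\mathcal J$ contains a nonzero compact element; an ideal is hypocompact if it is hypocompact as an algebra. Every Banach algebra $\mathcal B$ has a largest hypocompact ideal, which is closed; it is called the hypocompact radical and denoted $\mathcal B_{hc}$. A subset $Y$ of a topological space is dense in itself if it has no isolated points (in the relative topology), perfect if it is closed and dense in itself, and scattered if it contains no nonempty dense-in-itself subsets. Every space $X$ is uniquely the disjoint union $X=X_p\cup X_s$ of a perfect set $X_p$ and a scattered set $X_s$. *)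

(* Defs.v *)
From mathcomp Require Import all_boot all_algebra.
From mathcomp Require Import all_classical all_reals all_analysis.
From mathcomp Require Import complex.
Import GRing.Theory Num.Theory.
Local Open Scope classical_set_scope.
Local Open Scope ring_scope.

Set Implicit Arguments.
Unset Strict Implicit.
Unset Printing Implicit Defensive.

Section Defs.
Variable R : realType.

Section Top.
Variable X : topologicalType.

Definition dense_in_itself (Y : set X) : Prop :=
  forall y, Y y -> forall U, nbhs y U -> exists z, [/\ Y z, U z & z <> y].

Definition perfect (Y : set X) : Prop := closed Y /\ dense_in_itself Y.

Definition scattered (Y : set X) : Prop :=
  forall Z, Z `<=` Y -> dense_in_itself Z -> Z = set0.
End Top.

Section C0.
Variable X : topologicalType.
Local Notation F := (X -> R[i]).

Definition cnorm (z : R[i]) : R := Normc.normc z.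

Definition continuousC (f : F) : Prop :=
  forall x (e : R), 0 < e -> \forall y \near x, cnorm (f y - f x) < e.

Definition vanishes_at_infinity (f : F) : Prop :=
  forall e : R, 0 < e -> exists K : set X,
    compact K /\ forall x, ~ K x -> cnorm (f x) < e.

Definition C0 : set F := [set f | continuousC f /\ vanishes_at_infinity f].

Definition supnorm_le (f : F) (r : R) : Prop := forall x, cnorm (f x) <= r.

(* quotient norm of the class of f modulo K is at most r:
   inf_{k in K} ||f - k||_oo <= r *)
Definition qnorm_le (K : set F) (f : F) (r : R) : Prop :=
  forall e : R, 0 < e -> exists k, K k /\ supnorm_le (f - k) (r + e).

Definition scal (c : R[i]) (f : F) : F := fun t => c * f t.

Definition is_ideal (A I : set F) : Prop :=
  [/\ I `<=` A, I 0,
      (forall f g, I f -> I g -> I (f + g)),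
      (forall c f, I f -> I (scal c f)) &
      (forall a k, A a -> I k -> I (a * k) /\ I (k * a))].

Definition closed_in (A I : set F) : Prop :=
  forall f, A f ->
    (forall e : R, 0 < e -> exists k, I k /\ supnorm_le (f - k) e) -> I f.

(* the class of a is a compact element of the quotient A/K, i.e. the operator
   [x] |-> [a x a] on A/K is compact: the image of the closed unit ball of A/K
   is (pre)compact = totally bounded for the quotient norm *)
Definition compact_elt (A K : set F) (a : F) : Prop :=
  forall e : R, 0 < e -> exists s : seq F,
    (forall y, y \in s -> A y) /\
    forall x, A x -> qnorm_le K x 1 ->
      exists2 y, y \in s & qnorm_le K (a * x * a - y) e.

Definition hypocompact (A : set F) : Prop :=
  forall K, is_ideal A K -> closed_in A K -> K <> A ->
    exists a, [/\ A a, ~ K a & compact_elt A K a].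

End C0.
End Defs.

(* Main.v *)
Require Import Defs.
From HB Require Import structures.
From mathcomp Require Import all_boot all_algebra.
From mathcomp Require Import all_classical all_reals all_analysis.
From mathcomp Require Import finmap.
From mathcomp Require Import complex.
From mathcomp Require Import ring lra.
Import GRing.Theory Num.Theory order.Order.TTheory.
Import numFieldNormedType.Exports.
Local Open Scope classical_set_scope.
Local Open Scope ring_scope.

Section Cn.
Context {R : realType}.
Implicit Types z w : R[i].

Lemma cnormE z : `|z| = ((cnorm z)%:C)%C.
Proof. reflexivity. Qed.

Lemma cnorm_ge0 z : 0 <= cnorm z.
Proof. by case: z => a b; rewrite /cnorm /= sqrtr_ge0. Qed.

Lemma cnormD z w : cnorm (z + w) <= cnorm z + cnorm w.
Proof. exact: le_normcD. Qed.

Lemma cnormN z : cnorm (- z) = cnorm z.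
Proof. exact: normcN. Qed.

Lemma cnormM z w : cnorm (z * w) = cnorm z * cnorm w.
Proof. exact: Normc.normcM. Qed.

Lemma cnorm0 : cnorm (0 : R[i]) = 0.
Proof. exact: Normc.normc0. Qed.

Lemma cnorm_eq0 z : cnorm z = 0 -> z = 0.
Proof. exact: Normc.eq0_normc. Qed.

Lemma cnormB z w : cnorm (z - w) = cnorm (w - z).
Proof. by rewrite -cnormN opprB. Qed.

Lemma cnormR (r : R) : cnorm (r%:C)%C = `|r|.
Proof. by rewrite /cnorm /= expr0n /= addr0 sqrtr_sqr. Qed.

Lemma cnormJ z : cnorm (z^*)%C = cnorm z.
Proof. by case: z => a b; rewrite /cnorm /= sqrrN. Qed.

Lemma cnorm_ReIm z : cnorm z <= `|complex.Re z| + `|complex.Im z|.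
Proof.
case: z => a b; rewrite /cnorm /=.
have H : a ^+ 2 + b ^+ 2 <= (`|a| + `|b|) ^+ 2.
  rewrite sqrrD !real_normK ?num_real // -addrA lerD2l lerDr.
  by rewrite mulrn_wge0 // mulr_ge0.
apply: le_trans (ler_wsqrtr H) _.
by rewrite sqrtr_sqr ger0_norm // addr_ge0.
Qed.

Lemma mulcJ z : z * (z^*)%C = ((cnorm z ^+ 2)%:C)%C.
Proof. by rewrite -sqr_normc cnormE rmorphXn. Qed.

Lemma cnorm_sub z w : cnorm z - cnorm w <= cnorm (z - w).
Proof.
rewrite lerBlDr; apply: le_trans (cnormD _ _); by rewrite subrK.
Qed.

Lemma realCB (a b : R) : ((a%:C - b%:C) = (a - b)%:C)%C.
Proof. by rewrite -raddfB. Qed.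
Lemma realCD (a b : R) : ((a%:C + b%:C) = (a + b)%:C)%C.
Proof. by rewrite -raddfD. Qed.
Lemma realCM (a b : R) : ((a%:C * b%:C) = (a * b)%:C)%C.
Proof. by rewrite -rmorphM. Qed.

Lemma cnormV z : cnorm z^-1 = (cnorm z)^-1.
Proof. exact: Normc.normcV. Qed.

End Cn.

Section Cont.
Variable R : realType.
Variable X : topologicalType.
Implicit Types f g : X -> R[i].

Lemma cont_cst (c : R[i]) : continuousC (fun _ : X => c).
Proof.
move=> x e e0; apply: nearW => y; by rewrite subrr cnorm0.
Qed.

Lemma cont_add f g : continuousC f -> continuousC g -> continuousC (f + g).
Proof.
move=> hf hg x e e0.
have e2 : 0 < e / 2 by rewrite divr_gt0.
near=> y.
have Hf : cnorm (f y - f x) < e / 2 by near: y; exact: hf.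
have Hg : cnorm (g y - g x) < e / 2 by near: y; exact: hg.
change (cnorm (f y + g y - (f x + g x)) < e).
have -> : f y + g y - (f x + g x) = (f y - f x) + (g y - g x).
  by rewrite opprD addrACA.
apply: le_lt_trans (cnormD _ _) _.
have -> : e = e / 2 + e / 2 by rewrite -splitr.
exact: ltrD.
Unshelve. all: by end_near.
Qed.

Lemma cont_mul f g : continuousC f -> continuousC g -> continuousC (f * g).
Proof.
move=> hf hg x e e0.
set A := cnorm (f x); set B := cnorm (g x).
have A0 : 0 <= A by apply: cnorm_ge0.
have B0 : 0 <= B by apply: cnorm_ge0.
have d1 : 0 < Num.min 1 (e / 4 / (B + 1)).
  by rewrite lt_min ltr01 /= !divr_gt0 // ltr_pwDr.
have d2 : 0 < e / 2 / (A + 1) by rewrite !divr_gt0 // ltr_pwDr.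
near=> y.
have Hf : cnorm (f y - f x) < Num.min 1 (e / 4 / (B + 1)) by near: y; exact: hf.
have Hg : cnorm (g y - g x) < e / 2 / (A + 1) by near: y; exact: hg.
change (cnorm (f y * g y - f x * g x) < e).
have -> : f y * g y - f x * g x = f y * (g y - g x) + (f y - f x) * g x.
  by rewrite mulrBr mulrBl addrA subrK.
apply: le_lt_trans (cnormD _ _) _; rewrite !cnormM.
set a := cnorm (f y - f x) in Hf *; set b := cnorm (g y - g x) in Hg *.
set c := cnorm (f y).
have a0 : 0 <= a by apply: cnorm_ge0.
have b0 : 0 <= b by apply: cnorm_ge0.
have hc : c <= A + a.
  rewrite /c /A /a; apply: le_trans (cnormD _ _); by rewrite addrC subrK.
move: Hf; rewrite lt_min => /andP[a1 a2].
have a3 : a * (B + 1) <= e / 4.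
  by rewrite -ler_pdivlMr ?ltr_pwDr // ltW.
have b3 : b * (A + 1) <= e / 2.
  by rewrite -ler_pdivlMr ?ltr_pwDr // ltW.
rewrite -/B; nra.
Unshelve. all: by end_near.
Qed.

Lemma cont_scal (c : R[i]) f : continuousC f -> continuousC (scal c f).
Proof. move=> hf; exact (@cont_mul (fun _ => c) f (cont_cst c) hf). Qed.

Lemma cont_conj f : continuousC f -> continuousC (fun y => (f y)^*%C).
Proof.
move=> hf x e e0; apply: filterS (hf x _ e0) => y.
by rewrite -rmorphB cnormJ.
Qed.

Lemma cont_realC (r : X -> R) : continuous r -> continuousC (fun y => (r y)%:C%C).
Proof.
move=> hr x e e0.
have : \forall y \near x, ball (r x) e (r y).
  by apply: hr; apply: nbhsx_ballx.
apply: filterS => y H; rewrite realCB cnormR distrC; move: H; by rewrite /ball /=.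
Qed.

Lemma cont_inv f (d : R) : 0 < d -> (forall y, d <= cnorm (f y)) ->
  continuousC f -> continuousC (fun y => (f y)^-1).
Proof.
move=> d0 hd hf x e e0.
have ed : 0 < e * (d * d) by rewrite !mulr_gt0.
apply: filterS (hf x _ ed) => y H.
have fy : f y != 0.
  apply/negP => /eqP h; have := hd y; rewrite h cnorm0; lra.
have fx : f x != 0.
  apply/negP => /eqP h; have := hd x; rewrite h cnorm0; lra.
have -> : (f y)^-1 - (f x)^-1 = (f x - f y) / (f y * f x).
  by field; rewrite fy fx.
rewrite cnormM cnormV cnormM cnormB.
have hy := hd y; have hx := hd x.
rewrite ltr_pdivrMr ?mulr_gt0 //; try lra.
apply: lt_le_trans H _; rewrite ler_pM2l //.
by apply: ler_pM; lra.
Qed.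

End Cont.

Section C0s.
Variable R : realType.
Variable X : topologicalType.
Implicit Types f g : X -> R[i].

Lemma van_add f g : vanishes_at_infinity f -> vanishes_at_infinity g ->
  vanishes_at_infinity (f + g).
Proof.
move=> hf hg e e0.
have e2 : 0 < e / 2 by rewrite divr_gt0.
have [K1 [cK1 H1]] := hf _ e2; have [K2 [cK2 H2]] := hg _ e2.
exists (K1 `|` K2); split; first exact: compactU.
move=> x Kx; have n1 : ~ K1 x by move=> h; apply: Kx; left.
have n2 : ~ K2 x by move=> h; apply: Kx; right.
apply: le_lt_trans (cnormD _ _) _.
have -> : e = e / 2 + e / 2 by rewrite -splitr.
exact: ltrD (H1 _ n1) (H2 _ n2).
Qed.

Lemma van_mul f g : vanishes_at_infinity f -> vanishes_at_infinity g ->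
  vanishes_at_infinity (f * g).
Proof.
move=> hf hg e e0.
have [K1 [cK1 H1]] := hf _ ltr01; have [K2 [cK2 H2]] := hg _ e0.
exists (K1 `|` K2); split; first exact: compactU.
move=> x Kx; have n1 : ~ K1 x by move=> h; apply: Kx; left.
have n2 : ~ K2 x by move=> h; apply: Kx; right.
change (cnorm (f x * g x) < e); rewrite cnormM.
have := H1 _ n1; have := H2 _ n2; have := cnorm_ge0 (f x); have := cnorm_ge0 (g x).
nra.
Qed.

Lemma van_le f g (M : R) : 0 < M -> vanishes_at_infinity g ->
  (forall y, cnorm (f y) <= M * cnorm (g y)) -> vanishes_at_infinity f.
Proof.
move=> M0 hg hle e e0.
have eM : 0 < e / M by rewrite divr_gt0.
have [K [cK H]] := hg _ eM; exists K; split => // x Kx.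
apply: le_lt_trans (hle x) _.
by rewrite mulrC -ltr_pdivlMr //; apply: H.
Qed.

Lemma C0_add f g : C0 f -> C0 g -> C0 (f + g).
Proof. by move=> [cf vf] [cg vg]; split; [exact: cont_add|exact: van_add]. Qed.

Lemma C0_mul f g : C0 f -> C0 g -> C0 (f * g).
Proof. by move=> [cf vf] [cg vg]; split; [exact: cont_mul|exact: van_mul]. Qed.

Lemma C0_scal (c : R[i]) f : C0 f -> C0 (scal c f).
Proof.
move=> [cf vf]; split; first exact: cont_scal.
apply: (@van_le _ f (cnorm c + 1)) => //.
  by rewrite ltr_pwDr // cnorm_ge0.
move=> y; rewrite /scal cnormM ler_wpM2r ?cnorm_ge0 //.
by rewrite lerDl.
Qed.

Lemma C0_conj f : C0 f -> C0 (fun y => (f y)^*%C).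
Proof.
move=> [cf vf]; split; first exact: cont_conj.
apply: (@van_le _ f 1) => // y; by rewrite cnormJ mul1r.
Qed.

Lemma C0_0 : C0 (0 : X -> R[i]).
Proof.
split; first exact: cont_cst.
move=> e e0; exists set0; split; first exact: compact0.
by move=> x _; rewrite cnorm0.
Qed.

Lemma C0_opp f : C0 f -> C0 (- f).
Proof.
move=> h; have := @C0_scal (-1) f h.
have -> // : scal (-1) f = - f.
by apply: funext => y; rewrite /scal mulN1r.
Qed.

Lemma C0_sub f g : C0 f -> C0 g -> C0 (f - g).
Proof. by move=> hf hg; apply: C0_add => //; apply: C0_opp. Qed.

Lemma cont_open_lt f g : continuousC f -> continuousC g ->
  open [set y | cnorm (f y) < cnorm (g y)].
Proof.
move=> hf hg; rewrite openE => y /= Hy.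
rewrite /interior.
have d0 : 0 < (cnorm (g y) - cnorm (f y)) / 2 by rewrite divr_gt0 // subr_gt0.
near=> z.
have H1 : cnorm (f z - f y) < (cnorm (g y) - cnorm (f y)) / 2 by near: z; exact: hf.
have H2 : cnorm (g z - g y) < (cnorm (g y) - cnorm (f y)) / 2 by near: z; exact: hg.
have T1 := cnorm_sub (f z) (f y).
have T2 := cnorm_sub (g y) (g z).
rewrite cnormB in T2.
change (cnorm (f z) < cnorm (g z)); lra.
Unshelve. all: by end_near.
Qed.

Lemma closed_ge f (e : R) : 0 <= e -> continuousC f ->
  closed [set y | e <= cnorm (f y)].
Proof.
move=> e0 hf.
have -> : [set y | e <= cnorm (f y)] = ~` [set y | cnorm (f y) < cnorm ((fun _ => (e%:C)%C) y)].
  have E : cnorm ((e%:C)%C) = e by rewrite cnormR ger0_norm.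
  apply/seteqP; split => y.
    move=> h1; change (~ (cnorm (f y) < cnorm ((e%:C)%C))); rewrite E.
    by apply/negP; rewrite -leNgt.
  move=> h1; change (e <= cnorm (f y)).
  have h2 : ~ (cnorm (f y) < cnorm ((e%:C)%C)) by [].
  by rewrite E in h2; rewrite leNgt; apply/negP.
apply: open_closedC; apply: cont_open_lt => //; exact: cont_cst.
Qed.

End C0s.

Section Bump.
Variable R : realType.
Variable X : pseudoMetricType R.
Hypothesis lcX : locally_compact [set: X].

Lemma bump (x : X) (W : set X) : nbhs x W ->
  exists a : X -> R[i], [/\ C0 a, (forall y, exists r : R, a y = (r%:C)%C /\ 0 <= r <= 1),
    a x = 1 & forall y, ~ W y -> a y = 0].
Proof.
move=> Wx.
have [U hU [cU clU]] := lcX x I.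
have Ux : nbhs x U by move: hU; rewrite /within /=; apply: filterS => y; apply.
set O := (U `&` W)°.
have Ox : O x by rewrite /O /interior /=; apply: filterI.
have clB : closed (~` O) by apply: open_closedC; apply: open_interior.
have nBx : ~ (~` O) x by [].
have US := @point_uniform_separator R _ x _ clB nBx.
have [f [cf f01 fx0 fB1]] := proj1 (@uniform_separatorP _ R _ _) US.
have fx : f x = 0 by apply: fx0; exists x.
have fB : forall y, ~ O y -> f y = 1 by move=> y hy; apply: fB1; exists y.
have fr : forall y, 0 <= f y <= 1.
  move=> y; have : `[0, 1]%classic (f y) by apply: f01; exists y.
  by rewrite /= in_itv /=.
have OU : forall y, O y -> U y /\ W y.
  by move=> y /nbhs_singleton.
exists (fun y => ((1 - f y)%:C)%C); split.
- split.
    apply: cont_realC => y; apply: cvgB; [exact: cvg_cst|exact: cf].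
  move=> e e0; exists U; split => // y Uy.
  have Oy : ~ O y by move=> /OU [].
  by rewrite fB // subrr cnorm0.
- move=> y; exists (1 - f y); split => //.
  by have := fr y; move=> /andP[h1 h2]; apply/andP; split; lra.
- by rewrite fx subr0.
- move=> y Wy; have Oy : ~ O y by move=> /OU [].
  by rewrite fB // subrr.
Qed.

End Bump.

Section Ideal.
Variable R : realType.
Variable X : topologicalType.
Variable Xp : set X.
Local Notation F := (X -> R[i]).
Definition Sset : set F := [set f : F | C0 f /\ forall x, Xp x -> f x = 0].

Lemma S_C0 f : Sset f -> C0 f. Proof. by case. Qed.

Lemma S_0 : Sset 0.
Proof. by split; [exact: C0_0|]. Qed.

Lemma S_add f g : Sset f -> Sset g -> Sset (f + g).
Proof.
move=> [cf zf] [cg zg]; split; first exact: C0_add.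
by move=> x hx; change (f x + g x = 0); rewrite zf // zg // addr0.
Qed.

Lemma S_scal c f : Sset f -> Sset (scal c f).
Proof.
move=> [cf zf]; split; first exact: C0_scal.
by move=> x hx; rewrite /scal zf // mulr0.
Qed.

Lemma S_mulC0 a f : C0 a -> Sset f -> Sset (a * f) /\ Sset (f * a).
Proof.
move=> ca [cf zf]; split; split; try by apply: C0_mul.
  by move=> x hx; change (a x * f x = 0); rewrite zf // mulr0.
by move=> x hx; change (f x * a x = 0); rewrite zf // mul0r.
Qed.

Lemma S_mul f g : Sset f -> Sset g -> Sset (f * g).
Proof. by move=> [cf _] hg; case: (@S_mulC0 f g cf hg). Qed.

Lemma S_conj f : Sset f -> Sset (fun y => (f y)^*%C).
Proof.
move=> [cf zf]; split; first exact: C0_conj.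
by move=> x hx; rewrite zf // conjc0.
Qed.

Lemma S_sub f g : Sset f -> Sset g -> Sset (f - g).
Proof.
move=> [cf zf] [cg zg]; split; first exact: C0_sub.
by move=> x hx; change (f x - g x = 0); rewrite zf // zg // subrr.
Qed.

Lemma S_ideal : is_ideal (@C0 R X) Sset.
Proof.
split.
- by move=> f [].
- exact: S_0.
- exact: S_add.
- exact: S_scal.
- exact: S_mulC0.
Qed.

End Ideal.

Section P.
Variable X : topologicalType.
Variable x0 : X.
Definition PX : Type := X.
HB.instance Definition _ := Topological.on PX.
HB.instance Definition _ := isPointed.Build PX x0.
Lemma cover_of_compact0 (A : set X) : compact A -> cover_compact A.
Proof. move=> cA. have : @compact PX A by exact cA. rewrite compact_cover. exact. Qed.
End P.
Lemma cover_of_compact (X : topologicalType) (A : set X) : compact A -> cover_compact A.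
Proof.
move=> cA; case: (pselect (exists x : X, True)) => [[x0 _]|nX].
  exact: (@cover_of_compact0 X x0 A cA).
move=> I D f _ _; exists fset0%fset => //.
by move=> x _; exfalso; apply: nX; exists x.
Qed.

Lemma sum_ge_term (R : realType) (I : eqType) (s : seq I) (G : I -> R) c :
  (forall i, 0 <= G i) -> c \in s -> G c <= \sum_(i <- s) G i.
Proof.
move=> G0; elim: s => // a s IH; rewrite in_cons big_cons => /orP[/eqP ->|cs].
  by rewrite lerDl sumr_ge0.
by apply: le_trans (IH cs) _; rewrite lerDr.
Qed.

Section HK.
Variable R : realType.
Variable X : topologicalType.
Variable Xp : set X.
Local Notation F := (X -> R[i]).
Local Notation S := (@Sset R X Xp).
Variable K : set F.
Hypothesis idK : is_ideal S K.
Hypothesis clK : closed_in S K.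

Definition hull : set X := [set x | forall k, K k -> k x = 0].

Lemma K_S k : K k -> S k. Proof. by case: idK => + _ _ _ _; apply. Qed.
Lemma K_0 : K 0. Proof. by case: idK. Qed.
Lemma K_add f g : K f -> K g -> K (f + g). Proof. by case: idK => _ _ + _ _; apply. Qed.
Lemma K_scal c f : K f -> K (scal c f). Proof. by case: idK => _ _ _ + _; apply. Qed.
Lemma K_mul a k : S a -> K k -> K (a * k) /\ K (k * a).
Proof. by case: idK => _ _ _ _; apply. Qed.

Lemma K_sumsq (I : Type) (s : seq I) (m : I -> F) : (forall c, K (m c)) ->
  K (fun y => \sum_(c <- s) m c y * (m c y)^*%C).
Proof.
move=> Km; elim: s => [|a s IH].
  have -> : (fun y => \sum_(c <- [::]) m c y * (m c y)^*%C) = 0.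
    by apply: funext => y; rewrite big_nil.
  exact: K_0.
have -> : (fun y => \sum_(c <- a :: s) m c y * (m c y)^*%C) =
  (fun y => (m a y)^*%C) * m a + (fun y => \sum_(c <- s) m c y * (m c y)^*%C).
  by apply: funext => y; rewrite big_cons /= mulrC.
apply: K_add => //.
have Sc : S (fun y => (m a y)^*%C) by apply: S_conj; apply: K_S.
by case: (@K_mul _ _ Sc (Km a)).
Qed.

Lemma HK h : S h -> (forall x, hull x -> h x = 0) -> K h.
Proof.
move=> Sh hT; apply: clK => // e e0.
have [[ch vh] zh] := Sh.
have [Kc [cKc HKc]] := vh _ e0.
set C := Kc `&` [set y | e <= cnorm (h y)].
have cC : compact C by apply: compact_closedI => //; apply: closed_ge => //; apply: ltW.
have ex_m : forall c, exists m, K m /\ (C c -> cnorm (h c) < cnorm (m c)).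
  move=> c; case: (pselect (C c)) => Cc; last by exists 0; split => //; exact: K_0.
  have hc0 : h c != 0.
    apply/negP => /eqP h0; case: Cc => _; rewrite /= h0 cnorm0; lra.
  have : ~ hull c by move=> /hT h0; rewrite h0 eqxx in hc0.
  move=> /existsNP [k /not_implyP [Kk kc]].
  have kc0 : 0 < cnorm (k c).
    rewrite lt_def cnorm_ge0 andbT; apply/negP => /eqP /cnorm_eq0; exact: kc.
  exists (scal (((cnorm (h c) + 1) / cnorm (k c))%:C)%C k); split.
    exact: K_scal.
  move=> _; rewrite /scal cnormM cnormR ger0_norm; last first.
    by rewrite divr_ge0 // ?addr_ge0 ?cnorm_ge0 // ltW.
  by rewrite divfK ?gt_eqF // ltrDl.
have [m hm] := choice ex_m.
have Km c : K (m c) by case: (hm c).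
have Cm c : C c -> cnorm (h c) < cnorm (m c c) by case: (hm c).
have cm c : continuousC (m c) by case: (@K_S _ (Km c)) => [[]].
pose O c := [set y | cnorm (h y) < cnorm (m c y)].
have cov : cover_compact C := @cover_of_compact X C cC.
have [] := cov X C O.
- by move=> c _; apply: cont_open_lt.
- by move=> c Cc; exists c => //; apply: Cm.
move=> D' D'C CD'.
pose k := fun y => \sum_(c <- D') m c y * (m c y)^*%C.
pose r := fun y => \sum_(c <- D') cnorm (m c y) ^+ 2.
have Kk : K k by apply: K_sumsq.
have kr y : k y = ((r y)%:C)%C.
  rewrite /k /r raddf_sum /=; apply: eq_bigr => c _; exact: mulcJ.
have r0 y : 0 <= r y by apply: sumr_ge0 => c _; apply: sqr_ge0.
have rC y : C y -> cnorm (h y) ^+ 2 <= r y.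
  move=> /CD' [c /= c_in Oc].
  have := @sum_ge_term R _ D' (fun c => cnorm (m c y) ^+ 2) c (fun i => sqr_ge0 _) c_in.
  apply: le_trans.
  rewrite lerXn2r ?nnegrE ?cnorm_ge0 //; exact: ltW.
set eta := e ^+ 2.
have eta0 : 0 < eta by rewrite exprn_gt0.
have den y : cnorm (k y + (eta%:C)%C) = r y + eta.
  by rewrite kr realCD cnormR ger0_norm // addr_ge0 // ltW.
have den0 y : k y + (eta%:C)%C != 0.
  apply/negP => /eqP h0; have := den y; rewrite h0 cnorm0 => h1.
  have := r0 y; lra.
pose q := fun y => h y * (k y + (eta%:C)%C)^-1.
have Sq : S q.
  split; last by move=> x hx; rewrite /q zh // mul0r.
  split.
    apply: (@cont_mul _ _ h (fun y => (k y + (eta%:C)%C)^-1)) => //.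
    apply: (@cont_inv _ _ _ eta) => //.
      by move=> y; rewrite den lerDr.
    apply: (@cont_add _ _ k (fun _ => (eta%:C)%C)); last exact: cont_cst.
    by case: (@K_S _ Kk) => [[]].
  apply: (@van_le _ _ _ h (eta^-1)) => //; first by rewrite invr_gt0.
  move=> y; rewrite /q cnormM cnormV den mulrC ler_wpM2r ?cnorm_ge0 //.
  by rewrite lef_pV2 ?posrE ?ltr_wpDl // lerDr.
exists (q * k); split; first by case: (@K_mul _ _ Sq Kk).
move=> y; change (cnorm (h y - q y * k y) <= e).
have -> : h y - q y * k y = h y * (eta%:C)%C / (k y + (eta%:C)%C).
  rewrite /q; field; exact: den0.
rewrite cnormM cnormV cnormM cnormR (ger0_norm (ltW eta0)) den.
have hy0 := cnorm_ge0 (h y).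
have ry0 := r0 y.
rewrite ler_pdivrMr ?ltr_wpDl //.
case: (pselect (C y)) => Cy.
  move: (rC y Cy); case: Cy => _ /= hey hr.
  have h1 : e * cnorm (h y) ^+ 2 <= e * r y by rewrite ler_wpM2l // ltW.
  have h2 : 0 <= (e * cnorm (h y)) * (cnorm (h y) - e).
    by rewrite mulr_ge0 ?subr_ge0 // mulr_ge0 // ltW.
  have h3 : 0 <= e ^+ 3 by rewrite exprn_ge0 // ltW.
  rewrite /eta; nra.
have hye : cnorm (h y) < e.
  case: (pselect (Kc y)) => Ky; last exact: HKc.
  by rewrite ltNge; apply/negP => hey; apply: Cy.
nra.
Qed.

End HK.

Section Net.
Variable R : realType.

Lemma cnorm_Re (z : R[i]) : `|complex.Re z| <= cnorm z.
Proof.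
case: z => a b; rewrite /cnorm /= -sqrtr_sqr.
by apply: ler_wsqrtr; rewrite lerDl sqr_ge0.
Qed.

Lemma cnorm_Im (z : R[i]) : `|complex.Im z| <= cnorm z.
Proof.
case: z => a b; rewrite /cnorm /= -sqrtr_sqr.
by apply: ler_wsqrtr; rewrite lerDr sqr_ge0.
Qed.

Lemma real_net (e : R) : 0 < e -> exists rs : seq R,
  forall r, `|r| <= 1 -> exists2 c, c \in rs & `|r - c| <= e.
Proof.
move=> e0.
have cov := @cover_of_compact R _ (@segment_compact R (-1) 1).
have [] := cov R `[-1, 1]%classic (fun c => ball c e).
- by move=> c _; apply: ball_open.
- by move=> c hc; exists c => //; apply: ballxx.
move=> D' _ HD; exists D' => r hr.
have : `[-1, 1]%classic r by rewrite /= in_itv /= -ler_norml.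
move=> /HD [c /= cD bc]; exists c => //.
by move: bc; rewrite /ball /= distrC => /ltW.
Qed.

Lemma disk_net (e : R) : 0 < e -> exists cs : seq R[i],
  forall z, cnorm z <= 1 -> exists2 c, c \in cs & cnorm (z - c) <= e.
Proof.
move=> e0; have e2 : 0 < e / 2 by rewrite divr_gt0.
have [rs Hrs] := @real_net (e / 2) e2.
exists [seq (a +i* b)%C | a <- rs, b <- rs] => z hz.
have [a ars ha] := Hrs (complex.Re z) (le_trans (cnorm_Re z) hz).
have [b brs hb] := Hrs (complex.Im z) (le_trans (cnorm_Im z) hz).
exists (a +i* b)%C; first by apply/allpairsP; exists (a, b).
apply: le_trans (cnorm_ReIm _) _.
have -> : e = e / 2 + e / 2 by rewrite -splitr.
by case: z hz ha hb => x y /= _ ha hb; apply: lerD.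
Qed.

End Net.

Section Part2.
Variable R : realType.
Variable X : pseudoMetricType R.
Hypothesis lcX : locally_compact [set: X].
Variables Xp Xs : set X.
Hypothesis hXp : perfect Xp.
Hypothesis hXs : scattered Xs.
Hypothesis hcov : Xp `|` Xs = setT.
Local Notation S := (@Sset R X Xp).

Lemma S_hypo : hypocompact S.
Proof.
move=> K idK clK neq.
have [g [Sg nKg]] : exists g, S g /\ ~ K g.
  case: (pselect (exists g, S g /\ ~ K g)) => // ng; exfalso; apply: neq.
  apply/seteqP; split; first by move=> k; exact: (@K_S R X Xp K idK).
  move=> g Sg; apply: contrapT => nK; apply: ng; by exists g.
have [t0 [Tt0 gt0]] : exists t, @hull R X K t /\ g t != 0.
  case: (pselect (exists t, @hull R X K t /\ g t != 0)) => // nt; exfalso; apply: nKg.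
  apply: (@HK R X Xp K idK clK g Sg) => x Tx; apply/eqP; apply: contrapT => gx.
  apply: nt; exists x; split => //; exact/negP.
have [[cg vg] zg] := Sg.
pose Z := [set x | @hull R X K x /\ g x != 0].
have Zsub : Z `<=` Xs.
  move=> z [_ gz]; have : setT z by [].
  rewrite -hcov => -[pz|//]; by rewrite zg // eqxx in gz.
have : ~ dense_in_itself Z.
  move=> /(hXs _ Zsub) Z0; have : Z t0 by split.
  by rewrite Z0.
move=> /existsNP [t /not_implyP [[Tt gt] /existsNP [U /not_implyP [Ut nz]]]].
pose W := U `&` ([set y | g y != 0] `&` ~` Xp).
have Wt : nbhs t W.
  apply: filterI => //; apply: filterI.
    have gt0' : 0 < cnorm (g t).
      rewrite lt_def cnorm_ge0 andbT; apply/negP => /eqP /cnorm_eq0 h0.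
      by rewrite h0 eqxx in gt.
    apply: filterS (cg t _ gt0') => y hy; apply/negP => /eqP gy0.
    by move: hy; rewrite gy0 sub0r cnormN ltxx.
  have : open (~` Xp) by rewrite openC; case: hXp.
  rewrite openE => /(_ t); apply => tp.
  by rewrite zg // eqxx in gt.
have [a [Ca ar at1 aW]] := @bump R X lcX t W Wt.
have TW z : @hull R X K z -> W z -> z = t.
  move=> Tz [Uz [gz _]]; apply: contrapT => zt; apply: nz; exists z; split => //.
have Sa : S a by split => // x px; apply: aW => -[_ [_]]; apply.
have nKa : ~ K a by move=> Ka; have := Tt _ Ka; rewrite at1 => /eqP; rewrite oner_eq0.
have a1 y : cnorm (a y) <= 1.
  by have [r [-> /andP[r0 r1]]] := ar y; rewrite cnormR ger0_norm.
exists a; split => // e e0.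
have [cs Hcs] := @disk_net R e e0.
exists [seq scal c (a * a) | c <- cs]; split.
  by move=> y /mapP [c _ ->]; apply: S_scal; apply: S_mul.
move=> x Sx qx.
have xt1 : cnorm (x t) <= 1.
  apply/ler_addgt0Pr => d d0; have [k [Kk hk]] := qx d d0.
  have := hk t; change (cnorm (x t - k t) <= 1 + d -> cnorm (x t) <= 1 + d).
  by rewrite (Tt _ Kk) subr0.
have [c cin hc] := Hcs _ xt1.
exists (scal c (a * a)); first by apply: map_f.
move=> d d0; exists (a * x * a - scal (x t) (a * a)); split.
  apply: (@HK R X Xp K idK clK).
    by apply: S_sub; [apply: S_mul => //; apply: S_mul|apply: S_scal; apply: S_mul].
  move=> z Tz; change (a z * x z * a z - x t * (a z * a z) = 0).
  case: (pselect (W z)) => Wz.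
    by rewrite (TW z Tz Wz); ring.
  by rewrite aW // !mul0r mulr0 subrr.
move=> y; change (cnorm (a y * x y * a y - c * (a y * a y) - (a y * x y * a y - x t * (a y * a y))) <= e + d).
have -> : a y * x y * a y - c * (a y * a y) - (a y * x y * a y - x t * (a y * a y)) = (x t - c) * (a y * a y).
  by ring.
rewrite !cnormM.
have h1 := a1 y; have h2 := cnorm_ge0 (a y); have h3 := cnorm_ge0 (x t - c).
have h4 : cnorm (a y) * cnorm (a y) <= 1 by nra.
have h5 : 0 <= cnorm (a y) * cnorm (a y) by nra.
nra.
Qed.

End Part2.

Section Seq.
Variable X : topologicalType.
Hypothesis hX : hausdorff_space X.
Variable Xp : set X.
Hypothesis dXp : dense_in_itself Xp.

Definition valid (V : set X) (s : X * set X) := [/\ open s.2, s.2 s.1, Xp s.1 & s.2 `<=` V].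

Lemma points_seq (x1 : X) (V : set X) : Xp x1 -> nbhs x1 V ->
  exists (p : nat -> X) (Rg : nat -> set X), forall n,
    [/\ Xp (p n), nbhs (p n) (Rg n), Rg n `<=` V &
        forall m, m != n -> ~ Rg m (p n)].
Proof.
move=> px1 Vx1.
have step : forall s, exists t : (X * set X) * set X, valid V s ->
  [/\ valid V t.1, t.1.2 `<=` s.2, ~ t.1.2 s.1, nbhs s.1 t.2 &
      t.2 `<=` s.2 /\ t.2 `&` t.1.2 = set0].
  move=> [q W]; case: (pselect (valid V (q, W))) => vs; last by exists ((q, W), W).
  case: vs => /= oW Wq pq WV.
  have Wn : nbhs q W by apply: open_nbhs_nbhs.
  have [q' [pq' Wq' nq]] := dXp q pq W Wn.
  have qq : q != q' by apply/eqP => h; apply: nq.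
  have hX' := hX; rewrite open_hausdorff in hX'.
  have [[A B] /= [qA q'B] [oA oB /eqP AB0]] := hX' _ _ qq.
  move/set_mem: qA => qA; move/set_mem: q'B => q'B.
  exists ((q', W `&` B), W `&` A) => _ /=; split.
  - split => //=; first exact: openI.
    by move=> y [/WV].
  - by move=> y [].
  - move=> [_ Bq]; have : (A `&` B) q by [].
    by rewrite AB0.
  - by apply: open_nbhs_nbhs; split => //; exact: openI.
  - split; first by move=> y [].
    apply/seteqP; split => // y [[_ Ay] [_ By]].
    have : (A `&` B) y by [].
    by rewrite AB0.
have [stepf hstep] := choice step.
pose s0 := (x1, V°).
have vs0 : valid V s0.
  split => //=; first exact: open_interior.
  by move=> y /nbhs_singleton.
pose st n := iter n (fun s => (stepf s).1) s0.
have vst n : valid V (st n).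
  elim: n => // n IH; rewrite /st iterS.
  by case: (hstep _ IH).
have dec n k : (st (n + k)%N).2 `<=` (st n).2.
  elim: k => [|k IH]; first by rewrite addn0.
  rewrite addnS /st iterS; move=> y hy; apply: IH.
  by case: (hstep _ (vst (n + k)%N)) => _ + _ _ _; apply.
exists (fun n => (st n).1), (fun n => (stepf (st n)).2) => n.
have [_ _ _ _ [_ _]] := hstep _ (vst n).
have [_ Wn pn _] := vst n.
case: (hstep _ (vst n)) => _ _ nW nR [RW RW0].
split => //.
- by move=> y /RW; case: (vst n) => _ _ _; apply.
- move=> m mn; case: (ltngtP m n) => [mn'|nm|e]; last by rewrite e eqxx in mn.
  +
    case: (hstep _ (vst m)) => _ _ _ _ [_ R0] Rp.
    have Hin : (stepf (st m)).1.2 ((st n).1).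
      have := dec m.+1 (n - m.+1)%N; rewrite subnKC //; apply; exact: Wn.
    have : ((stepf (st m)).2 `&` (stepf (st m)).1.2) ((st n).1) by split.
    by rewrite R0.
  +
    case: (hstep _ (vst m)) => _ _ _ _ [Rsub _] Rp.
    apply: nW.
    have := dec n.+1 (m - n.+1)%N; rewrite subnKC //.
    rewrite /st iterS; apply.
    by apply: Rsub.
Qed.

End Seq.

Section Part3.
Variable R : realType.
Variable X : pseudoMetricType R.
Hypothesis hX : hausdorff_space X.
Hypothesis lcX : locally_compact [set: X].
Variable Xp : set X.
Hypothesis hXp : perfect Xp.
Local Notation F := (X -> R[i]).

Lemma part3 (I : set F) : is_ideal (@C0 R X) I -> hypocompact I -> I `<=` @Sset R X Xp.
Proof.
move=> idI hI f If.
have [IC0 I0 Iadd Iscal Imul] := idI.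
split; first exact: IC0.
move=> x0 px0; apply: contrapT => fx0.
pose K := [set g : F | I g /\ forall x, Xp x -> g x = 0].
have idK : is_ideal I K.
  split.
  - by move=> g [].
  - by split.
  - move=> g h [Ig zg] [Ih zh]; split; first exact: Iadd.
    by move=> x px; change (g x + h x = 0); rewrite zg // zh // addr0.
  - move=> c g [Ig zg]; split; first exact: Iscal.
    by move=> x px; rewrite /scal zg // mulr0.
  - move=> a k Ia [Ik zk]; have [h1 h2] := Imul a k (IC0 _ Ia) Ik.
    split; split => // x px.
      by change (a x * k x = 0); rewrite zk // mulr0.
    by change (k x * a x = 0); rewrite zk // mul0r.
have clK : closed_in I K.
  move=> g Ig H; split => // x px.
  have h : cnorm (g x) <= 0.
    apply/ler_addgt0Pr => e e0; rewrite add0r.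
    have [k [[_ zk] hk]] := H e e0; have := hk x.
    by change (cnorm (g x - k x) <= e -> cnorm (g x) <= e); rewrite zk // subr0.
  by apply: cnorm_eq0; apply/le_anti; rewrite h cnorm_ge0.
have nKI : K <> I.
  move=> KI; have : K f by rewrite KI.
  by case => _ /(_ x0 px0).
have [a [Ia nKa ca]] := hI K idK clK nKI.
have [x1 [px1 ax1]] : exists x1, Xp x1 /\ a x1 != 0.
  apply: contrapT => nx; apply: nKa; split => // x px; apply/eqP.
  apply: contrapT => h; apply: nx; exists x; split => //; exact/negP.
set c := cnorm (a x1).
have c0 : 0 < c.
  rewrite lt_def cnorm_ge0 andbT; apply/negP => /eqP /cnorm_eq0 h0.
  by rewrite h0 eqxx in ax1.
have [[conta _] _] : C0 a /\ True by split => //; exact: IC0.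
have c2 : 0 < c / 2 by rewrite divr_gt0.
pose V := [set y | cnorm (a y - a x1) < c / 2].
have Vn : nbhs x1 V := conta x1 _ c2.
have aV y : V y -> c / 2 <= cnorm (a y) /\ cnorm (a y) <= 2 * c.
  move=> hy; have T1 := cnorm_sub (a y) (a x1).
  have T2 := cnorm_sub (a x1) (a y); rewrite cnormB in T2.
  have hy2 : cnorm (a y - a x1) < c / 2 := hy; rewrite -/c in T1 T2; split; lra.
have [p [Rg hp]] := @points_seq X hX Xp hXp.2 x1 V px1 Vn.
have bmp : forall n, exists phi : F, [/\ C0 phi,
    (forall y, exists r : R, phi y = (r%:C)%C /\ 0 <= r <= 1),
    phi (p n) = 1 & forall y, ~ Rg n y -> phi y = 0].
  by move=> n; case: (hp n) => _ hn _ _; exact: (@bump R X lcX (p n) (Rg n) hn).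
have [phi hphi] := choice bmp.
pose M := 2 * c.
have M0 : 0 < M by rewrite mulr_gt0.
have Mi0 : 0 <= M^-1 by rewrite invr_ge0 ltW.
pose xx n := scal (((M^-1)%:C)%C) (phi n * a).
have Ixx n : I (xx n).
  apply: Iscal; have [C0phi _ _ _] := hphi n.
  by have [h _] := Imul (phi n) a C0phi Ia.
have phi1 n y : cnorm (phi n y) <= 1.
  have [_ hr _ _] := hphi n; have [r [-> /andP[r0 r1]]] := hr y.
  by rewrite cnormR ger0_norm.
have phi0 n y : 0 <= cnorm (phi n y) by apply: cnorm_ge0.
have qxx n : qnorm_le K (xx n) 1.
  move=> d d0; exists 0; split; first by split.
  move=> y; change (cnorm ((M^-1)%:C%C * (phi n y * a y) - 0) <= 1 + d).
  rewrite subr0 !cnormM cnormR (ger0_norm Mi0).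
  case: (pselect (Rg n y)) => Ry.
    have RV : Rg n `<=` V by case: (hp n).
    have [_ Va] := aV y (RV y Ry).
    have := phi1 n y; have := phi0 n y; have := cnorm_ge0 (a y).
    rewrite -/M => h1 h2 h3.
    have hM : M = 2 * c by []. rewrite mulrC ler_pdivrMr //; nra.
  have [_ _ _ z] := hphi n; rewrite (z y Ry) cnorm0 mul0r mulr0; lra.
have e0 : 0 < (c / 2) ^+ 3 / M / 8 by rewrite !divr_gt0 // exprn_gt0.
have [s [sA hs]] := ca _ e0.
have exY : forall n, exists y, y \in s /\ qnorm_le K (a * xx n * a - y) ((c / 2) ^+ 3 / M / 8).
  move=> n; have [y ys hy] := hs (xx n) (Ixx n) (qxx n).
  by exists y.
have [Y hY] := choice exY.
have [i [j [ij Yij]]] : exists i j, i != j /\ Y i = Y j.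
  apply: contrapT => nn.
  have inj : {in iota 0 (size s).+1 &, injective Y}.
    move=> i j _ _ h; apply/eqP; apply: contrapT => /negP ij; apply: nn.
    by exists i, j.
  have := @uniq_leq_size _ (map Y (iota 0 (size s).+1)) s.
  rewrite (map_inj_in_uniq inj) iota_uniq size_map size_iota ltnn => H.
  have sub : {subset map Y (iota 0 (size s).+1) <= s}.
    by move=> y /mapP [k _ ->]; case: (hY k).
  by have := H isT sub.
set e := (c / 2) ^+ 3 / M / 8.
have val n y : (a * xx n * a) y = a y * ((M^-1)%:C%C * (phi n y * a y)) * a y by [].
have ev n : exists2 z : R[i], cnorm ((a * xx n * a) (p i) - Y n (p i) - z) <= e + e & z = 0.
  have [k [[_ zk] hk]] := (proj2 (hY n)) e e0.
  exists (k (p i)); last by apply: zk; case: (hp i).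
  exact: hk (p i).
have [zi hi zi0] := ev i; have [zj hj zj0] := ev j.
rewrite zi0 subr0 in hi; rewrite zj0 subr0 -Yij in hj.
have [_ _ phii _] := hphi i.
have [_ _ _ phij] := hphi j.
have nR : ~ Rg j (p i) by case: (hp i) => _ _ _; apply; rewrite eq_sym.
rewrite val phij // mul0r mulr0 mulr0 mul0r sub0r cnormN in hj.
rewrite val phii mul1r in hi.
have Ri : V (p i) by case: (hp i) => _ /nbhs_singleton Rpi RV _; apply: RV.
have [ai _] := aV _ Ri.
have T := cnormD (a (p i) * ((M^-1)%:C%C * a (p i)) * a (p i) - Y i (p i)) (Y i (p i)).
rewrite subrK in T.
move: T; rewrite !cnormM cnormR (ger0_norm Mi0) => T.
set A := cnorm (a (p i)) in ai T.
have A3 : (c / 2) ^+ 3 <= A ^+ 3 by rewrite lerXn2r // ?nnegrE ?cnorm_ge0 // ltW.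
have H1 : A * (M^-1 * A) * A = A ^+ 3 / M by ring.
rewrite H1 in T.
have H2 : (c / 2) ^+ 3 / M <= A ^+ 3 / M by rewrite ler_pM2r // invr_gt0.
rewrite /e in hi hj.
have H3 : 0 < (c / 2) ^+ 3 / M by rewrite divr_gt0 // exprn_gt0.
have : (0 : R) < 0 by lra.
by rewrite ltxx.
Qed.

End Part3.

(* C_0(X)_hc (the largest hypocompact ideal of C_0(X)) is the set of f in C_0(X)
   vanishing on the perfect part X_p. *)
Theorem theorem2p2 (R : realType) (X : pseudoMetricType R)
    (hX : hausdorff_space X) (lcX : locally_compact [set: X])
    (Xp Xs : set X) (hXp : perfect Xp) (hXs : scattered Xs)
    (hdisj : Xp `&` Xs = set0) (hcov : Xp `|` Xs = setT) :
  let S := [set f : X -> R[i] | @C0 R X f /\ forall x, Xp x -> f x = 0] in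
  [/\ is_ideal (@C0 R X) S, hypocompact S &
      forall I, is_ideal (@C0 R X) I -> hypocompact I -> I `<=` S].
Proof.
move=> S; split.
- exact: (@S_ideal R X Xp).
- exact: (@S_hypo R X lcX Xp Xs hXp hXs hcov).
- move=> I idI hI; exact: (@part3 R X hX lcX Xp hXp I idI hI).
Qed.
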